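(* Let $M$ and $N$ be MV-algebras and let $p\colon M\to N$ be a function with $p(0)=0$ and $p(1)=1$. The following are equivalent: (1) $p$ is a probability map; (2) $p(a\oplus b)=p(a)+p(b)-p(a\odot b)$ for all $a,b\in M$, where $+$ and $-$ are the operations of the enveloping unital $\ell$-group $\Xi(N)$ of $N$; (3) for all $a,b\in M$, if $a\odot b=0$, then $p(a\oplus b)=p(a)\oplus p(b)$ and $p(a)\odot p(b)=0$; (4) for all $a,b\in M$, if $a\odot b=0$, then $p(a\oplus b)=p(a)+p(b)$ (sum computed in $\Xi(N)$).
   Context: For an MV-algebra $(M,\oplus,\neg,0)$: $1\coloneqq\neg 0$, $a\odot b\coloneqq\neg(\neg a\oplus\neg b)$, $a\vee b\coloneqq\neg(\neg a\oplus b)\oplus b$, $a\wedge b\coloneqq\neg(\neg a\vee\neg b)$. A probability map is a function $p\colon M\to N$ between MV-algebras such that for all $a,b\in M$: (P1) $p(a\oplus b)=p(a)\oplus p(b\wedge\neg a)$; (P2) $p(\neg a)=\neg p(a)$; (P3) $p(1)=1$. By Mundici's $\Gamma$-functor theory every MV-algebra $N$ is isomorphic to the unit interval $\Gamma(G,u)=[0,u]$ of a unique unital lattice-ordered Abelian group $(G,u)$ with $a\oplus b=(a+b)\wedge u$, $\neg a=u-a$; this $G$ is denoted $\Xi(N)$ (the enveloping unital $\ell$-group), and $N$ is identified with $[0,u]\subseteq\Xi(N)$. *)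

(* Defs.v *)
From mathcomp Require Import all_boot all_algebra.
Set Implicit Arguments. Unset Strict Implicit. Unset Printing Implicit Defensive.
Import GRing.Theory.
Local Open Scope ring_scope.

Record MVAlgebra := {
  mv_car :> Type;
  mv_oplus : mv_car -> mv_car -> mv_car;
  mv_neg : mv_car -> mv_car;
  mv_zero : mv_car;
  mv_assoc : forall a b c, mv_oplus a (mv_oplus b c) = mv_oplus (mv_oplus a b) c;
  mv_comm : forall a b, mv_oplus a b = mv_oplus b a;
  mv_zeroR : forall a, mv_oplus a mv_zero = a;
  mv_negK : forall a, mv_neg (mv_neg a) = a;
  mv_oneR : forall a, mv_oplus a (mv_neg mv_zero) = mv_neg mv_zero;
  mv_luk : forall a b, mv_oplus (mv_neg (mv_oplus (mv_neg a) b)) b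
                     = mv_oplus (mv_neg (mv_oplus (mv_neg b) a)) a
}.

Definition mv_one (M : MVAlgebra) : M := mv_neg (mv_zero M).
Definition mv_odot (M : MVAlgebra) (a b : M) : M :=
  mv_neg (mv_oplus (mv_neg a) (mv_neg b)).
Definition mv_join (M : MVAlgebra) (a b : M) : M :=
  mv_oplus (mv_neg (mv_oplus (mv_neg a) b)) b.
Definition mv_meet (M : MVAlgebra) (a b : M) : M :=
  mv_neg (mv_join (mv_neg a) (mv_neg b)).

Definition probability_map (M N : MVAlgebra) (p : M -> N) : Prop :=
  (forall a b : M, p (mv_oplus a b) = mv_oplus (p a) (p (mv_meet b (mv_neg a))))
  /\ (forall a : M, p (mv_neg a) = mv_neg (p a))
  /\ p (mv_one M) = mv_one N.

Definition is_lgroup (G : zmodType) (le : G -> G -> Prop)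
    (meet join : G -> G -> G) : Prop :=
  (forall x, le x x)
  /\ (forall x y, le x y -> le y x -> x = y)
  /\ (forall x y z, le x y -> le y z -> le x z)
  /\ (forall x y, le (meet x y) x /\ le (meet x y) y
                  /\ forall z, le z x -> le z y -> le z (meet x y))
  /\ (forall x y, le x (join x y) /\ le y (join x y)
                  /\ forall z, le x z -> le y z -> le (join x y) z)
  /\ (forall x y z, le x y -> le (x + z) (y + z)).

Definition is_strong_unit (G : zmodType) (le : G -> G -> Prop) (u : G) : Prop :=
  le 0 u /\ forall x : G, exists n : nat, le x (u *+ n).

(* phi : N -> G is an MV-isomorphism of N onto Gamma(G,u) = [0,u] with
   a (+) b = (a + b) /\ u and ~a = u - a. *)
Definition gamma_iso (N : MVAlgebra) (G : zmodType) (le : G -> G -> Prop)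
    (meet : G -> G -> G) (u : G) (phi : N -> G) : Prop :=
  injective phi
  /\ (forall x : G, (le 0 x /\ le x u) <-> exists a : N, phi a = x)
  /\ phi (mv_zero N) = 0
  /\ (forall a b : N, phi (mv_oplus a b) = meet (phi a + phi b) u)
  /\ (forall a : N, phi (mv_neg a) = u - phi a).

(* Main.v *)
Require Import Defs.
From mathcomp Require Import all_boot all_algebra.
Set Implicit Arguments. Unset Strict Implicit.
Import GRing.Theory.
Local Open Scope ring_scope.

Lemma mv0l (M : MVAlgebra) (a : M) : mv_oplus (mv_zero M) a = a.
Proof. by rewrite mv_comm mv_zeroR. Qed.

Lemma mv1l (M : MVAlgebra) (a : M) :
  mv_oplus (mv_neg (mv_zero M)) a = mv_neg (mv_zero M).
Proof. by rewrite mv_comm mv_oneR. Qed.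

Lemma mvNl (M : MVAlgebra) (a : M) : mv_oplus (mv_neg a) a = mv_neg (mv_zero M).
Proof.
have := mv_luk (mv_neg (mv_zero M)) a.
by rewrite mv_negK mv0l !mv_oneR.
Qed.

Definition md (M : MVAlgebra) (c d : M) : M :=
  mv_neg (mv_oplus (mv_neg (mv_oplus d c)) c).

Lemma L1 (M : MVAlgebra) (c d : M) : mv_odot c (md c d) = mv_zero M.
Proof.
rewrite /mv_odot /md mv_negK mv_comm -mv_assoc (mv_comm c) mvNl mv_oneR.
by rewrite mv_negK.
Qed.

Lemma L2 (M : MVAlgebra) (c d : M) : mv_oplus c (md c d) = mv_oplus c d.
Proof.
rewrite /md mv_comm.
have := mv_luk (mv_oplus d c) c.
move=> ->.
by rewrite (mv_comm d c) (mv_assoc (mv_neg c)) mvNl mv1l mv_negK mv0l.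
Qed.

Lemma meet_md (M : MVAlgebra) (c d : M) : mv_meet d (mv_neg c) = md c d.
Proof. by rewrite /mv_meet /mv_join /md !mv_negK. Qed.

Lemma orthN (M : MVAlgebra) (a : M) : mv_odot a (mv_neg a) = mv_zero M.
Proof. by rewrite /mv_odot mv_negK mvNl mv_negK. Qed.

Lemma oplusN (M : MVAlgebra) (a : M) : mv_oplus a (mv_neg a) = mv_one M.
Proof. by rewrite mv_comm mvNl. Qed.

Lemma orth_facts (M : MVAlgebra) (a b : M) : mv_odot a b = mv_zero M ->
  mv_meet b (mv_neg a) = b /\ mv_neg a = mv_oplus b (mv_neg (mv_oplus a b)).
Proof.
move=> h.
have h1 : mv_oplus (mv_neg a) (mv_neg b) = mv_neg (mv_zero M).
  by rewrite -h /mv_odot mv_negK.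
split.
  rewrite meet_md /md.
  have := mv_luk (mv_neg b) a.
  rewrite mv_negK h1 mv_negK mv0l => ->.
  by rewrite mv_negK.
have := mv_luk b (mv_neg a).
rewrite (mv_comm (mv_neg b)) h1 mv_negK mv0l => ->.
by rewrite mv_negK mv_comm.
Qed.

Lemma mdswap (M : MVAlgebra) (a b : M) : md (mv_neg a) (mv_neg b) = md b a.
Proof.
rewrite /md.
have := mv_luk (mv_neg a) b.
by rewrite mv_negK => ->.
Qed.

Lemma zE1 (G : zmodType) (x y u w : G) :
  y + w = x + y - (u - ((u - x) + w)).
Proof.
by rewrite opprB (addrC (u - x)) addrA addrA addrAC addrA subrK addrAC (addrC x) addrK.
Qed.
Lemma zE2 (G : zmodType) (x y u : G) :
  (u - x) + (u - y) = u + (u - (x + y)).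
Proof. by rewrite opprD [RHS]addrA addrACA. Qed.
Lemma zE3 (G : zmodType) (x y u : G) :
   u + (x + y - u) = x + y /\ u + (u - (x + y)) + (x + y - u) = u.
Proof. split. by rewrite addrC subrK. by rewrite -addrA (addrA (u - _)) subrK subrr addr0. Qed.
Lemma zE4 (G : zmodType) (x y u : G) :
   x + y + (u - (x + y)) = u.
Proof. by rewrite addrC subrK. Qed.

Theorem proposition3p3 (M N : MVAlgebra) (p : M -> N)
  (p0 : p (mv_zero M) = mv_zero N) (p1 : p (mv_one M) = mv_one N)
  (G : zmodType) (le : G -> G -> Prop) (meet join : G -> G -> G) (u : G)
  (HG : is_lgroup le meet join) (Hu : is_strong_unit le u)
  (phi : N -> G) (Hphi : gamma_iso le meet u phi) :
  (probability_map p <->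
     (forall a b : M,
        phi (p (mv_oplus a b)) = phi (p a) + phi (p b) - phi (p (mv_odot a b))))
  /\ (probability_map p <->
     (forall a b : M, mv_odot a b = mv_zero M ->
        p (mv_oplus a b) = mv_oplus (p a) (p b)
        /\ mv_odot (p a) (p b) = mv_zero N))
  /\ (probability_map p <->
     (forall a b : M, mv_odot a b = mv_zero M ->
        phi (p (mv_oplus a b)) = phi (p a) + phi (p b))).
Proof.
case: HG => [lerefl [leanti [letrans [meetP [_ leadd]]]]].
case: Hphi => [phiinj [phiim [phi0 [phiadd phineg]]]].
have rng : forall a, le 0 (phi a) /\ le (phi a) u.
  by move=> a; apply/phiim; exists a.
have phi1 : phi (mv_one N) = u by rewrite /mv_one phineg phi0 subr0.
have meet_le : forall z, le z u -> meet z u = z.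
  move=> z hz; apply: leanti; first exact: (meetP z u).1.
  by apply: (meetP z u).2.2 => //; apply: lerefl.
have meet_ge : forall z, le u z -> meet z u = u.
  move=> z hz; apply: leanti; first exact: (meetP z u).2.1.
  by apply: (meetP z u).2.2 => //; apply: lerefl.
set S4 := forall a b : M, mv_odot a b = mv_zero M ->
        phi (p (mv_oplus a b)) = phi (p a) + phi (p b).
have e14 : probability_map p <-> S4.
  split.
    move=> [P1 [P2 _]] a b hab.
    have [hm hn] := orth_facts hab.
    have E : p (mv_oplus a b) = mv_oplus (p a) (p b) by rewrite P1 hm.
    have hle : le (phi (p b)) (u - phi (p a)).
      rewrite -phineg -P2 hn P1 phiadd.
      apply: (meetP _ _).2.2; last exact: (rng _).2.
      have := leadd _ _ (phi (p b)) (rng (p (mv_meet (mv_neg (mv_oplus a b)) (mv_neg b)))).1.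
      by rewrite add0r addrC.
    have hle2 : le (phi (p a) + phi (p b)) u.
      by have := leadd _ _ (phi (p a)) hle; rewrite subrK addrC.
    by rewrite E phiadd meet_le.
  move=> H4; split; last split => //.
    move=> a b; rewrite meet_md; apply: phiinj.
    have h := H4 a (md a b) (L1 a b); rewrite L2 in h.
    by rewrite h phiadd meet_le // -h; exact: (rng _).2.
  move=> a; apply: phiinj.
  have h := H4 a (mv_neg a) (orthN a).
  rewrite oplusN p1 phi1 in h.
  by rewrite phineg h (addrC (phi (p a))) addrK.
split; last split; last exact: e14.
  split.
    move=> P; have [_ [P2 _]] := P; have H4 := proj1 e14 P => a b.
    have h1 := H4 b (md b a) (L1 b a); rewrite L2 in h1.
    have h2 := H4 _ _ (L1 (mv_neg a) (mv_neg b)); rewrite L2 mdswap P2 phineg in h2.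
    by rewrite /mv_odot P2 phineg h2 mv_comm h1 (zE1 (phi (p a)) _ u).
  move=> H2; apply/e14 => a b hab.
  by rewrite H2 hab p0 phi0 subr0.
split.
  move=> /e14 H4 a b hab.
  have h := H4 a b hab.
  have hle : le (phi (p a) + phi (p b)) u by rewrite -h; exact: (rng _).2.
  split; apply: phiinj; first by rewrite h phiadd meet_le.
  rewrite /mv_odot phineg phiadd !phineg phi0 meet_ge ?subrr //.
  rewrite zE2.
  have := leadd _ _ (u - (phi (p a) + phi (p b))) hle.
  by rewrite zE4.
move=> H3; apply/e14 => a b hab.
have [h1 h2] := H3 a b hab.
have hle : le (phi (p a) + phi (p b)) u.
  move/(congr1 phi): h2; rewrite /mv_odot phineg phiadd !phineg phi0.
  move/subr0_eq => hm.
  have : le u ((u - phi (p a)) + (u - phi (p b))).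
    by rewrite {1}hm; exact: (meetP _ _).1.
  rewrite zE2 => hu.
  have := leadd _ _ (phi (p a) + phi (p b) - u) hu.
  by rewrite (zE3 (phi (p a)) (phi (p b)) u).2 (zE3 (phi (p a)) (phi (p b)) u).1.
by rewrite h1 phiadd meet_le.
Qed.
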